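(* Let $\alpha\in\mathrm{relint}(\Omega)$ and $L_\alpha(x)=1-\min_ix_i/\alpha_i$. Then: 1. $L_\alpha(x)\ge0$ for all $x\in\Omega$, and $L_\alpha(x)=0$ if and only if $x=\alpha$. 2. $|L_\alpha(x_1)-L_\alpha(x_2)|\le\frac{1}{\min_i\alpha_i}\|x_1-x_2\|_\infty$ for all $x_1,x_2\in\Omega$. 3. For every fluid sample path $(\bar A,\bar X)$ (under any stationary policy) and every regular point $t$, $\frac{d}{dt}L_\alpha(\bar X[t])\le\frac{1}{\min_i\alpha_i}$.
   Context: $\Omega$ is the probability simplex in $\mathbb R^n$, and $\mathrm{relint}(\Omega)$ consists of its points with positive coordinates. Model for item 3: $K$ units move among supply locations $V_S=\{1,\dots,n\}$. In each slot exactly one customer arrives (i.i.d. types $(j',k)$, with origin $j'$ in a finite set $V_D$ and destination $k\in V_S$). Either it is served by moving one unit from a compatible location $i$ to $k$, or it is dropped, in which case the state is unchanged. Fluid sample paths: with $\bar A^K[t]=\frac1K\mathbf A^K[Kt]$ (scaled cumulative arrivals by type) and $\bar X^{K,U}[t]=\frac1K\mathbf X^{K,U}[Kt]$ (linearly interpolated), a pair $(\bar A,\bar X)$ on $[0,T]$ is an FSP under policy $U$ if some sequence of realizable scaled arrival paths, scaled initial states, and resulting state paths has a subsequence converging uniformly to $(\bar A,\bar X[0],\bar X)$. A time $t$ is regular if the FSP is differentiable at $t$. *)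

(* Defs.v *)
From HB Require Import structures.
From mathcomp Require Import all_boot all_order all_algebra.
From mathcomp Require Import all_classical all_reals all_analysis.
Set Implicit Arguments. Unset Strict Implicit. Unset Printing Implicit Defensive.
Import Order.TTheory GRing.Theory Num.Theory.
Import numFieldNormedType.Exports.
Local Open Scope ring_scope.
Local Open Scope classical_set_scope.

Section Defs.
Variable R : realType.
Variable n : nat.

Definition simplex : set ('I_n -> R) :=
  [set x | (forall i, 0 <= x i) /\ \sum_(i < n) x i = 1].

Definition relint_simplex : set ('I_n -> R) :=
  [set x | (forall i, 0 < x i) /\ \sum_(i < n) x i = 1].

(* min_i f i (meaningful for n >= 1; the default head value is irrelevant
   since for n >= 1 it is one of the f i). *)
Definition fmin (f : 'I_n -> R) : R :=
  let s := [seq f i | i : 'I_n] in foldr Num.min (head 0 s) s.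

Definition supnorm (x : 'I_n -> R) : R := \big[Num.max/0]_(i < n) `|x i|.

Definition Lalpha (alpha x : 'I_n -> R) : R := 1 - fmin (fun i => x i / alpha i).

End Defs.

Section Model.
Variable R : realType.
Variable n : nat.                 (* supply locations V_S = 'I_n *)
Variable VD : finType.            (* demand origins V_D *)

(* customer type (j', k) : origin j' in V_D, destination k in V_S *)
Definition ctype := (VD * 'I_n)%type.

(* unnormalized state: number of units at each supply location *)
Definition state := 'I_n -> nat.

(* A stationary policy for the K-th system: given the current state and the
   arriving customer's type, either serve it from location i (Some i) or drop
   it (None). *)
Definition policy := nat -> state -> ctype -> option 'I_n.

Variable compat : 'I_n -> VD -> bool.  (* location i can serve origin j' *)

(* A service
   decision is carried out only if it is feasible (compatible location with an
   available unit); otherwise the customer is dropped and the state is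
   unchanged. *)
Definition step (U : policy) (K : nat) (x : state) (c : ctype) : state :=
  match U K x c with
  | Some i =>
      if compat i c.1 && (0 < x i)%N then
        fun l => ((x l - (l == i)) + (l == c.2))%N
      else x
  | None => x
  end.

Fixpoint traj (U : policy) (K : nat) (x0 : state) (w : nat -> ctype) (m : nat)
  : state :=
  match m with
  | 0 => x0
  | m'.+1 => step U K (traj U K x0 w m') (w m')
  end.

Definition cumarr (w : nat -> ctype) (m : nat) (c : ctype) : nat :=
  count (fun l => w l == c) (iota 0 m).

Definition interp (f : nat -> R) (s : R) : R :=
  let m := Num.truncn s in f m + (s - m%:R) * (f m.+1 - f m).

Definition scaledA (K : nat) (w : nat -> ctype) (t : R) (c : ctype) : R :=
  interp (fun m => (cumarr w m c)%:R / K%:R) (K%:R * t).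

Definition scaledX (U : policy) (K : nat) (x0 : state) (w : nat -> ctype)
  (t : R) (i : 'I_n) : R :=
  interp (fun m => (traj U K x0 w m i)%:R / K%:R) (K%:R * t).

(* i.i.d. arrival types with probability vector p; a realizable arrival
   sequence is one whose every slot has a type of positive probability *)
Definition realizable (p : ctype -> R) (w : nat -> ctype) : Prop :=
  forall m, 0 < p (w m).

Definition FSP (p : ctype -> R) (U : policy) (T : R)
  (Abar : R -> ctype -> R) (Xbar : R -> 'I_n -> R) : Prop :=
  exists (w : nat -> nat -> ctype) (x0 : nat -> state) (phi : nat -> nat),
    (forall K, realizable p (w K)) /\
    (forall K, \sum_(i < n) x0 K i = K)%N /\
    (forall r, (phi r < phi r.+1)%N) /\
    (forall eps : R, 0 < eps ->
       exists r0, forall r, (r0 <= r)%N ->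
         forall t, 0 <= t <= T ->
           (forall c, `|scaledA (phi r) (w (phi r)) t c - Abar t c| <= eps) /\
           (forall i, `|scaledX U (phi r) (x0 (phi r)) (w (phi r)) t i
                        - Xbar t i| <= eps)).

Definition regular (Abar : R -> ctype -> R) (Xbar : R -> 'I_n -> R) (t : R)
  : Prop :=
  (forall c, derivable (fun s => Abar s c) t 1) /\
  (forall i, derivable (fun s => Xbar s i) t 1).

End Model.

(* Main.v *)
Require Import Defs.
From HB Require Import structures.
From mathcomp Require Import all_boot all_order all_algebra.
From mathcomp Require Import all_classical all_reals all_analysis.
From mathcomp Require Import ring lra zify.
Import Order.TTheory GRing.Theory Num.Theory.
Import numFieldNormedType.Exports.
Local Open Scope ring_scope.
Local Open Scope classical_set_scope.

Module Aux.
Set Implicit Arguments. Unset Strict Implicit.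


Section Fmin.
Variable R : realType.

Lemma foldr_min_le (d : R) (s : seq R) x : x \in s -> foldr Num.min d s <= x.
Proof.
elim: s => //= a s IH; rewrite inE => /orP [/eqP->|/IH h].
  by rewrite ge_min lexx.
by rewrite ge_min h orbT.
Qed.

Lemma foldr_min_mem (d : R) (s : seq R) : foldr Num.min d s \in d :: s.
Proof.
elim: s => [|a s IH] /=; first by rewrite inE.
rewrite /Num.min; case: ifP => _; first by rewrite !inE eqxx orbT.
move: IH; rewrite !inE => /orP [->|->] //; by rewrite !orbT.
Qed.

Lemma fmin_le n (f : 'I_n -> R) i : fmin f <= f i.
Proof. by apply: foldr_min_le; apply: map_f; rewrite mem_enum. Qed.

Lemma fmin_mem n (f : 'I_n -> R) : (0 < n)%N -> exists i, fmin f = f i.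
Proof.
move=> n0.
have : fmin f \in [seq f i | i : 'I_n].
  rewrite /fmin.
  set s := [seq f i | i : 'I_n].
  have : s != [::].
    by rewrite -size_eq0 size_map size_enum_ord -lt0n.
  case: s => // a s _ /=.
  have := foldr_min_mem a (a :: s); rewrite /= inE => /orP[/eqP->|]//.
  by rewrite inE eqxx.
by case/mapP => i _ ->; exists i.
Qed.

Lemma fmin_lip n (f1 f2 : 'I_n -> R) c : (0 < n)%N ->
  (forall j, `|f1 j - f2 j| <= c) -> `|fmin f1 - fmin f2| <= c.
Proof.
move=> n0 H.
have [j1 e1] := fmin_mem f1 n0; have [j2 e2] := fmin_mem f2 n0.
rewrite ler_distl; apply/andP; split.
- have h1 := fmin_le f2 j1; have h2 := H j1; rewrite ler_distl in h2.
  case/andP: h2 => h2 _; rewrite e1. lra.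
- have h1 := fmin_le f1 j2; have h2 := H j2; rewrite ler_distl in h2.
  case/andP: h2 => _ h2; rewrite e2. lra.
Qed.

End Fmin.



Section L.
Variable R : realType.
Variable n : nat.
Variable alpha : 'I_n -> R.
Hypothesis halpha : relint_simplex alpha.

Lemma n_gt0 : (0 < n)%N.
Proof.
case: halpha => _; case: n alpha => // a; rewrite big_ord0 => /eqP.
by rewrite eq_sym oner_eq0.
Qed.

Lemma fmin_alpha_gt0 : 0 < fmin alpha.
Proof. have [i ->] := fmin_mem alpha n_gt0; exact: halpha.1. Qed.

Lemma L_lip (x1 x2 : 'I_n -> R) d : (forall j, `|x1 j - x2 j| <= d) ->
  `|Lalpha alpha x1 - Lalpha alpha x2| <= (fmin alpha)^-1 * d.
Proof.
move=> H; rewrite /Lalpha.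
have -> : 1 - fmin (fun i => x1 i / alpha i) - (1 - fmin (fun i => x2 i / alpha i))
  = fmin (fun i => x2 i / alpha i) - fmin (fun i => x1 i / alpha i) by ring.
rewrite distrC; apply: fmin_lip n_gt0 _ => j.
have aj := halpha.1 j; have fm := fmin_alpha_gt0; have fj := fmin_le alpha j.
rewrite -mulrBl normrM normfV (gtr0_norm aj) mulrC.
apply: ler_pM => //; first by rewrite invr_ge0 ltW.
by rewrite lef_pV2 // posrE.
Qed.

Lemma L_ge0 x : simplex x -> 0 <= Lalpha alpha x.
Proof.
case=> x0 x1; rewrite /Lalpha subr_ge0.
set m := fmin _.
have h : forall i, m * alpha i <= x i.
  move=> i; have := fmin_le (fun i => x i / alpha i) i; rewrite -/m.
  by rewrite ler_pdivlMr // halpha.1.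
have : \sum_(i < n) m * alpha i <= \sum_(i < n) x i by apply: ler_sum => i _.
by rewrite -mulr_sumr halpha.2 x1 mulr1.
Qed.

Lemma L_eq0 x : simplex x -> (Lalpha alpha x = 0 <-> x = alpha).
Proof.
case=> x0 x1; split.
- rewrite /Lalpha => /eqP; rewrite subr_eq0 eq_sym => /eqP m1.
  have h : forall i, alpha i <= x i.
    move=> i; have := fmin_le (fun i => x i / alpha i) i; rewrite m1.
    by rewrite ler_pdivlMr ?mul1r // halpha.1.
  have hs : \sum_(i < n) (x i - alpha i) = 0.
    by rewrite sumrB x1 halpha.2 subrr.
  apply: funext => i; apply/eqP; rewrite -subr_eq0; apply/eqP.
  move/eqP: hs; rewrite psumr_eq0; last by move=> j _; rewrite subr_ge0.
  by move/allP => /(_ i (mem_index_enum _)) /implyP /(_ isT) /eqP.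
- move=> ->; rewrite /Lalpha.
  have [i ->] := fmin_mem (fun i => alpha i / alpha i) n_gt0.
  by rewrite divff ?subrr // gt_eqF // halpha.1.
Qed.

End L.



Section Dyn.
Variable R : realType.

Lemma natr_dist1 (a b : nat) : (a <= b.+1)%N -> (b <= a.+1)%N ->
  `|a%:R - b%:R| <= (1 : R).
Proof.
move=> h1 h2; case: (leqP a b) => hab.
- rewrite distrC -natrB // ger0_norm ?ler0n // -[1]/(1%:R) ler_nat; lia.
- rewrite -natrB ?(ltnW hab) // ger0_norm ?ler0n // -[1]/(1%:R) ler_nat; lia.
Qed.

Lemma interp_piece (f : nat -> R) (m : nat) s :
  m%:R <= s <= m.+1%:R -> interp f s = f m + (s - m%:R) * (f m.+1 - f m).
Proof.
case/andP => h1 h2; rewrite /interp.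
case: (ltP s m.+1%:R) => h3.
  by rewrite (@truncn_def _ s m) // h1 h3.
have es : s = m.+1%:R by apply/eqP; rewrite eq_le h2 h3.
rewrite es (@truncn_def _ _ m.+1); last by rewrite lexx /= ltr_nat.
rewrite subrr mul0r addr0 -[m.+1]addn1 natrD addrAC subrr add0r mul1r; ring.
Qed.

Lemma interp_lip (f : nat -> R) c : (forall m, `|f m.+1 - f m| <= c) ->
  forall s1 s2, 0 <= s1 <= s2 -> `|interp f s2 - interp f s1| <= c * (s2 - s1).
Proof.
move=> Hf.
have c0 : 0 <= c by apply: le_trans (Hf 0%N).
have same : forall m s1 s2, m%:R <= s1 <= s2 -> s2 <= m.+1%:R ->
    `|interp f s2 - interp f s1| <= c * (s2 - s1).
  move=> m u1 u2 /andP[h1 h2] h3.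
  rewrite (interp_piece f (m:=m)) ?(le_trans h1 h2) ?h3 //.
  rewrite (interp_piece f (m:=m)) ?h1 ?(le_trans h2 h3) //.
  have -> : f m + (u2 - m%:R) * (f m.+1 - f m) - (f m + (u1 - m%:R) * (f m.+1 - f m))
    = (u2 - u1) * (f m.+1 - f m) by ring.
  rewrite normrM ger0_norm ?subr_ge0 // mulrC.
  by apply: ler_wpM2r; rewrite ?subr_ge0.
suff : forall N s1 s2, 0 <= s1 <= s2 ->
    (Num.truncn s2 <= Num.truncn s1 + N)%N ->
    `|interp f s2 - interp f s1| <= c * (s2 - s1).
  move=> H s1 s2 hs; apply: (H (Num.truncn s2)) => //; lia.
elim=> [|N IH] u1 u2 /andP[h1 h2] hN.
- have := truncn_itv h1; have := truncn_itv (le_trans h1 h2).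
  move=> /andP[_ a2] /andP[a1 _].
  apply: (same (Num.truncn u1)); first by rewrite a1 h2.
  apply: ltW; apply: (lt_le_trans a2); rewrite ler_nat; lia.
- case: (leqP (Num.truncn u2) (Num.truncn u1)) => hle.
    have := truncn_itv h1; have := truncn_itv (le_trans h1 h2).
    move=> /andP[_ a2] /andP[a1 _].
    apply: (same (Num.truncn u1)); first by rewrite a1 h2.
    apply: ltW; apply: (lt_le_trans a2); rewrite ler_nat; lia.
  set m := Num.truncn u1.
  have hp1 : u1 <= m.+1%:R by apply: ltW; have := truncn_itv h1 => /andP[].
  have hp2 : m.+1%:R <= u2 by rewrite -truncn_ge_nat // (le_trans h1 h2).
  have tp : Num.truncn (m.+1%:R : R) = m.+1 by apply: truncn_def; rewrite lexx /= ltr_nat.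
  have e1 : `|interp f u2 - interp f m.+1%:R| <= c * (u2 - m.+1%:R).
    apply: IH; first by rewrite hp2 ler0n.
    rewrite tp; lia.
  have e2 : `|interp f m.+1%:R - interp f u1| <= c * (m.+1%:R - u1).
    apply: (same m) => //; rewrite hp1 andbT.
    by have := truncn_itv h1 => /andP[].
  apply: le_trans (ler_distD (interp f m.+1%:R) _ _) _.
  have -> : c * (u2 - u1) = c * (u2 - m.+1%:R) + c * (m.+1%:R - u1) by ring.
  exact: lerD.
Qed.

End Dyn.



Section Dyn2.
Variable R : realType.
Variable n : nat.
Variable VD : finType.
Variable compat : 'I_n -> VD -> bool.

Lemma step_dist (U : policy n VD) K x c i :
  (step compat U K x c i <= (x i).+1)%N /\ (x i <= (step compat U K x c i).+1)%N.
Proof.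
rewrite /step; case: (U K x c) => [j|]; last by lia.
case: ifP => _; last by lia.
case: (i == j); case: (i == c.2); simpl; lia.
Qed.

Lemma scaledX_lip (U : policy n VD) K x0 w i (t1 t2 : R) : (0 < K)%N ->
  0 <= t1 <= t2 ->
  `|scaledX compat U K x0 w t2 i - scaledX compat U K x0 w t1 i| <= t2 - t1.
Proof.
move=> K0 /andP[h1 h2]; rewrite /scaledX.
have Kp : (0 : R) < K%:R by rewrite ltr0n.
apply: le_trans.
  apply: (interp_lip (c := K%:R^-1)).
    move=> m /=; rewrite -mulrBl normrM normfV (gtr0_norm Kp) ler_pdivrMr // mulVf ?gt_eqF //.
    have [a b] := step_dist U K (traj compat U K x0 w m) (w m) i.
    exact: natr_dist1.
  by rewrite mulr_ge0 ?ler0n //= ler_pM2l.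
by rewrite -mulrBr mulrA mulVf ?mul1r // gt_eqF.
Qed.

Lemma phi_ge (phi : nat -> nat) : (forall r, (phi r < phi r.+1)%N) -> forall r, (r <= phi r)%N.
Proof. move=> H; elim=> // r IH; have := H r; lia. Qed.

Lemma Xbar_lip (p : ctype n VD -> R) (U : policy n VD) (T : R) Abar (Xbar : R -> _ -> R) :
  FSP compat p U T Abar Xbar ->
  forall i t1 t2, 0 <= t1 <= T -> 0 <= t2 <= T ->
  `|Xbar t1 i - Xbar t2 i| <= `|t1 - t2|.
Proof.
case=> w [x0] [phi] [_ [_ [Hphi Hc]]] i t1 t2 ht1 ht2.
apply/ler_addgt0Pr => e e0.
have [r0 Hr] := Hc (e / 2) (divr_gt0 e0 (ltr0Sn _ 1)).
set r := maxn r0 1.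
have K0 : (0 < phi r)%N by have := phi_ge Hphi r; rewrite /r; lia.
have [_ A1] := Hr r (leq_maxl _ _) t1 ht1.
have [_ A2] := Hr r (leq_maxl _ _) t2 ht2.
pose S := @scaledX R n VD compat U (phi r) (x0 (phi r)) (w (phi r)).
have hS : `|S t1 i - S t2 i| <= `|t1 - t2|.
  rewrite /S; case: (leP t1 t2) => h.
    rewrite distrC [X in _ <= X]distrC [X in _ <= X]ger0_norm ?subr_ge0 //.
    by apply: scaledX_lip => //; case/andP: ht1 => -> _.
  rewrite [X in _ <= X]ger0_norm ?subr_ge0 ?(ltW h) //; apply: scaledX_lip => //.
  by case/andP: ht2 => -> _; rewrite ltW.
have A1' := A1 i; have A2' := A2 i.
have -> : Xbar t1 i - Xbar t2 i =
  (Xbar t1 i - S t1 i) + (S t1 i - S t2 i) + (S t2 i - Xbar t2 i) by ring.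
apply: le_trans (ler_normD _ _) _.
apply: le_trans (lerD (ler_normD _ _) (lexx _)) _.
rewrite distrC in A1'.
have -> : `|t1 - t2| + e = e / 2 + `|t1 - t2| + e / 2 by field.
by apply: lerD => //; apply: lerD.
Qed.

End Dyn2.

End Aux.
Import Aux.

Theorem lemma6 (R : realType) (n : nat) (alpha : 'I_n -> R)
  (halpha : relint_simplex alpha) :
  (* 1. *)
  ((forall x, simplex x -> 0 <= Lalpha alpha x) /\
   (forall x, simplex x -> (Lalpha alpha x = 0 <-> x = alpha))) /\
  (* 2. *)
  (forall x1 x2, simplex x1 -> simplex x2 ->
     `|Lalpha alpha x1 - Lalpha alpha x2|
       <= (fmin alpha)^-1 * supnorm (fun i => x1 i - x2 i)) /\
  (* 3. *)
  (forall (VD : finType) (compat : 'I_n -> VD -> bool) (p : ctype n VD -> R)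
          (U : policy n VD) (T : R)
          (Abar : R -> ctype n VD -> R) (Xbar : R -> 'I_n -> R) (t : R),
     (forall c, 0 <= p c) -> \sum_c p c = 1 ->
     FSP compat p U T Abar Xbar ->
     0 < t < T -> regular Abar Xbar t ->
     derivable (fun s => Lalpha alpha (Xbar s)) t 1 ->
     (fun s => Lalpha alpha (Xbar s))^`() t <= (fmin alpha)^-1).
Proof.
split; first split.
- exact: L_ge0.
- exact: L_eq0.
split.
- move=> x1 x2 _ _; apply: L_lip => // j.
  rewrite /supnorm.
  exact: (le_bigmax (0:R) (fun i => `|x1 i - x2 i|) j).
move=> VD compat p U T Abar Xbar t _ _ hF /andP[t0 tT] _ hd.
set g := fun s => Lalpha alpha (Xbar s).
have glip : forall s1 s2, 0 <= s1 <= T -> 0 <= s2 <= T ->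
    `|g s1 - g s2| <= (fmin alpha)^-1 * `|s1 - s2|.
  move=> s1 s2 h1 h2; apply: L_lip => // j.
  exact: (Xbar_lip hF).
have fm := fmin_alpha_gt0 halpha.
set d := Num.min t (T - t).
have d0 : 0 < d by rewrite lt_min t0 subr_gt0 tT.
rewrite derive1E /derive.
apply: limr_le => //.
near=> h.
have hne : h != 0 by near: h; exact: nbhs_dnbhs_neq.
have hlt : `|h| < d by near: h; exact: dnbhs0_lt.
rewrite /= scaler1 -/g.
have hd1 : `|h| < t by apply: lt_le_trans hlt _; rewrite ge_min lexx.
have hd2 : `|h| < T - t by apply: lt_le_trans hlt _; rewrite ge_min lexx orbT.
move: hd1 hd2; rewrite !ltr_norml => /andP[a1 a2] /andP[b1 b2].
have H1 : 0 <= h + t <= T by apply/andP; split; lra.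
have H2 : 0 <= t <= T by apply/andP; split; lra.
have := glip (h + t) t H1 H2.
rewrite addrK => Hg.
apply: le_trans (ler_norm _) _.
rewrite normrM normfV ler_pdivrMl ?normr_gt0 // mulrC.
by [].
Unshelve. all: by end_near.
Qed.
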